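(* Let $X$ be a one-good random valuation whose values are bounded from below by some $x_0\ge0$ (i.e., $X\ge x_0$ almost surely). Let $\lambda$ be a real number and let $\mu=(q,s)$ be an IC one-good mechanism with $q(x)\le\lambda$ for all $x\ge x_0$. Then \[ R(\mu;X)\le(\lambda-q(x_0))\,\textsc{Rev}(X)+s(x_0). \]
   Context: A one-good random valuation is a nonnegative real random variable. A one-good mechanism is a pair $\mu=(q,s)$ of Borel functions $q:\mathbb{R}_+\to[0,1]$, $s:\mathbb{R}_+\to\mathbb{R}$, with buyer payoff $b(x)=q(x)x-s(x)$; it is IC if $b(x)\ge q(\tilde x)x-s(\tilde x)$ for all $x,\tilde x\ge0$, and IR if $b(x)\ge0$ for all $x$. $R(\mu;X)=\mathbb{E}[s(X)]$, and $\textsc{Rev}(X)$ is the supremum of $R(\mu;X)$ over all IC and IR mechanisms (equivalently $\sup_{p\ge0}p\,\mathbb{P}[X\ge p]$). *)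

(* Defs.v *)
From HB Require Import structures.
From mathcomp Require Import all_boot all_order all_algebra.
From mathcomp Require Import all_classical all_reals all_analysis.
Set Implicit Arguments. Unset Strict Implicit. Unset Printing Implicit Defensive.
Import Order.TTheory GRing.Theory Num.Theory.
Local Open Scope classical_set_scope.
Local Open Scope ring_scope.

Section Defs.
Context {R : realType}.

(* A one-good mechanism (q,s): Borel q : R_+ -> [0,1], s : R_+ -> R.
   We represent them as functions on R; only their values on R_+ matter. *)
Definition mechanism (q s : R -> R) : Prop :=
  measurable_fun setT q /\ measurable_fun setT s /\
  (forall x, 0 <= x -> 0 <= q x <= 1).

Definition payoff (q s : R -> R) (x : R) : R := q x * x - s x.

Definition IC (q s : R -> R) : Prop :=
  forall x xt, 0 <= x -> 0 <= xt -> q xt * x - s xt <= payoff q s x.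

Definition IR (q s : R -> R) : Prop :=
  forall x, 0 <= x -> 0 <= payoff q s x.

Context {d : measure_display} {T : measurableType d}.

Definition Rrev (P : probability T R) (X : T -> R) (q s : R -> R) : \bar R :=
  (\int[P]_w (s (X w))%:E)%E.

Definition Rev (P : probability T R) (X : T -> R) : \bar R :=
  ereal_sup [set Rrev P X qs.1 qs.2 |
             qs in [set qs : (R -> R) * (R -> R) |
                    mechanism qs.1 qs.2 /\ IC qs.1 qs.2 /\ IR qs.1 qs.2]].
End Defs.

(* Main.v *)
Require Import Defs.
From HB Require Import structures.
From mathcomp Require Import all_boot all_order all_algebra.
From mathcomp Require Import all_classical all_reals all_analysis.
From mathcomp Require Import ring lra.
Import Order.TTheory GRing.Theory Num.Theory.
Local Open Scope classical_set_scope.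
Local Open Scope ring_scope.

Lemma indic_ge (R : realType) (x0 x : R) :
  (\1_(`[x0, +oo[%classic) x : R) = if x0 <= x then 1 else 0.
Proof.
rewrite indicE; case: ifPn => h.
  by rewrite mem_set //= in_itv /= andbT.
by rewrite memNset //= in_itv /= andbT; apply/negP.
Qed.

Lemma meas_if (R : realType) (x0 : R) (f : R -> R) :
  measurable_fun setT f ->
  measurable_fun setT (fun x => if x0 <= x then f x else 0).
Proof.
move=> mf.
have -> : (fun x => if x0 <= x then f x else 0) = f \* \1_(`[x0, +oo[%classic).
  apply/funext => x /=; rewrite indic_ge; case: ifP => _; by rewrite ?mulr1 ?mulr0.
apply: measurable_realfun.measurable_funM => //; exact: measurable_realfun.measurable_indic.
Qed.

Theorem lemma2 (d : measure_display) (T : measurableType d) (R : realType)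
  (P : probability T R) (X : {RV P >-> R}) (x0 lam : R) (q s : R -> R) :
  (forall w, 0 <= X w) ->
  0 <= x0 ->
  {ae P, forall w, x0 <= X w} ->
  mechanism q s -> IC q s ->
  (forall x, x0 <= x -> q x <= lam) ->
  (Rrev P X q s <= (lam - q x0)%:E * Rev P X + (s x0)%:E)%E.
Proof.
move=> X0 x00 aeX [mq [ms q01]] ic qle.
set q0 := q x0; set s0 := s x0.
have qmono : forall x, x0 <= x -> q0 <= q x.
  move=> x hx.
  have h1 := ic x x0 (le_trans x00 hx) x00.
  have h2 := ic x0 x x00 (le_trans x00 hx).
  rewrite /payoff in h1 h2.
  move: hx; rewrite le_eqVlt => /orP [/eqP <-|lt]; first by rewrite /q0.
  rewrite /q0; nra.
have sge : forall x, x0 <= x -> x0 * (q x - q0) <= s x - s0.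
  move=> x hx.
  have h2 := ic x0 x x00 (le_trans x00 hx); rewrite /payoff in h2.
  rewrite /q0 /s0; nra.
have sup : forall x, x0 <= x -> s x - s0 <= x * (q x - q0).
  move=> x hx.
  have h1 := ic x x0 (le_trans x00 hx) x00; rewrite /payoff in h1.
  rewrite /q0 /s0; nra.
have Qge0 : 0 <= lam - q0 by have := qle x0 (lexx _); rewrite /q0; lra.
have mX : measurable_fun setT X := measurable_funPT X.
pose h x := if x0 <= x then s x - s0 else 0.
have mh : measurable_fun setT h.
  apply: meas_if; apply: measurable_realfun.measurable_funB => //.
have eqA : Rrev P X q s = (\int[P]_w ((s0 + h (X w))%:E))%E.
  rewrite /Rrev; apply: ae_eq_integral => //.
  - apply/measurable_realfun.measurable_EFinP; exact: measurableT_comp.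
  - apply/measurable_realfun.measurable_EFinP.
    have -> : (fun w => s0 + h (X w)) = (fun x => s0 + h x) \o X by [].
    apply: measurableT_comp => //.
    exact: measurable_realfun.measurable_funD.
  - apply: filterS aeX => w hw _; rewrite /h hw; congr EFin; ring.
have [Q0|QN0] := eqVneq (lam - q0) 0.
  have h0 : forall x, h x = 0.
    move=> x; rewrite /h; case: ifP => // hx.
    have := qmono x hx; have := qle x hx; have := sge x hx; have := sup x hx.
    have : x0 <= x by []. move: Q0 x00; rewrite /q0 /s0; nra.
  rewrite eqA Q0 mul0e add0e.
  under eq_integral => w _ do rewrite h0 addr0.
  have -> : (\int[P]_w (s0%:E))%E = (\int[P]_w (cst s0%:E w))%E by [].
  rewrite integral_cst // (_ : _ [set: T] = 1%E) ?mule1 //; exact: probability_setT.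
have Qgt0 : 0 < lam - q0 by rewrite lt_neqAle eq_sym QN0 Qge0.
set Q := lam - q0.
pose q' x := if x0 <= x then (q x - q0) / Q else 0.
pose s' x := if x0 <= x then (s x - s0) / Q else 0.
have hs' : forall x, h x = Q * s' x.
  move=> x; rewrite /h /s'; case: ifP => _; last by rewrite mulr0.
  by rewrite mulrC divfK // gt_eqF.
have key : forall xt x, Q * (q' xt * x - s' xt) =
    if x0 <= xt then (q xt - q0) * x - (s xt - s0) else 0.
  move=> xt x; rewrite /q' /s'; case: ifP => _; last by rewrite !mul0r subr0 mulr0.
  field; exact: lt0r_neq0.
have ms' : measurable_fun setT s'.
  apply: meas_if; apply: measurable_realfun.measurable_funM => //.
  exact: measurable_realfun.measurable_funB.
have mq' : measurable_fun setT q'.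
  apply: meas_if; apply: measurable_realfun.measurable_funM => //.
  exact: measurable_realfun.measurable_funB.
have mech' : mechanism q' s'.
  split => //; split => // x x0p; rewrite /q'; case: ifP => hx; last by rewrite lexx ler01.
  apply/andP; split; first by apply: divr_ge0 => //; rewrite subr_ge0 qmono.
  by rewrite ler_pdivrMr // mul1r lerB // qle.
have ic' : IC q' s'.
  move=> x xt x0p xtp; rewrite /payoff -(ler_pM2l Qgt0) !key.
  have h1 := ic x xt x0p xtp; rewrite /payoff in h1.
  case: ifP => hxt; case: ifP => hx.
  - lra.
  - have := sge xt hxt; have := qmono xt hxt; move/negbT: hx; rewrite -ltNge => hx.
    move=> a b; nra.
  - have := ic x x0 x0p x00; rewrite /payoff -/q0 -/s0; lra.
  - by [].
have ir' : IR q' s'.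
  move=> x x0p; rewrite /payoff -(ler_pM2l Qgt0) key mulr0.
  case: ifP => hx //.
  have := ic x x0 x0p x00; rewrite /payoff -/q0 -/s0; lra.
have Ile : (Rrev P X q' s' <= Rev P X)%E.
  apply: ereal_sup_ubound; exists (q', s') => //.
pose f : T -> \bar R := fun w => (s' (X w))%:E.
have f0 : forall w, (0 <= f w)%E.
  move=> w; rewrite /f lee_fin /s'; case: ifP => // hx.
  apply: divr_ge0; last exact: ltW.
  have := sge _ hx; have := qmono _ hx; nra.
have eqB : (\int[P]_w ((s0 + h (X w))%:E))%E =
    (\int[P]_w ((EFin \o cst s0) w + Q%:E * f w))%E.
  by apply: eq_integral => w _; rewrite hs' /= EFinD EFinM.
have [Iy|Iny] := eqVneq (Rrev P X q' s') +oo%E.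
  have Ry : Rev P X = +oo%E by apply/eqP; rewrite -leye_eq -Iy.
  by rewrite Ry gt0_muley ?lte_fin // addye ?leey.
have fint : P.-integrable setT f.
  apply/integrableP; split.
    rewrite /f; apply/measurable_realfun.measurable_EFinP; exact: measurableT_comp.
  have -> : (\int[P]_w `|f w|)%E = Rrev P X q' s'.
    by apply: eq_integral => w _; rewrite gee0_abs.
  by rewrite ltey.
rewrite eqA eqB integralD //; last exact: integrableZl.
  have -> : (\int[P]_x (EFin \o cst s0) x = s0%:E)%E.
    rewrite (eq_integral (cst s0%:E)) // integral_cst //.
    rewrite (_ : _ [set: T] = 1%E) ?mule1 //; exact: probability_setT.
  rewrite integralZl // addeC.
  apply: leeD2r; apply: lee_wpmul2l; first by rewrite lee_fin ltW.
  exact: Ile.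
exact: finite_measure_integrable_cst.
Qed.
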